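(* Let $n>5$ and let $R$ be either of the complex Lie algebras $R(g^1_{(n,1)},2)$ ($n$ odd) or $R(g^2_{(n,1)},2)$ defined in the context. Then the second adjoint cohomology group vanishes: $H^2(R,R)=\{0\}$.
   Context: $R(g^1_{(n,1)},2)$ ($n$ odd): Lie algebra with basis $\{e_1,\dots,e_n,x,y\}$ and nonzero brackets (plus antisymmetric counterparts) $[e_1,e_i]=e_{i+1}$ ($2\le i\le n-2$), $[e_i,e_{n-i}]=(-1)^ie_n$ ($2\le i\le\frac{n-1}{2}$), $[e_1,x]=e_1$, $[e_i,x]=(i-2)e_i$ ($2\le i\le n-1$), $[e_n,x]=(n-4)e_n$, $[e_i,y]=e_i$ ($2\le i\le n-1$), $[e_n,y]=2e_n$. $R(g^2_{(n,1)},2)$: Lie algebra with basis $\{e_1,\dots,e_n,x,y\}$ and nonzero brackets (plus antisymmetric counterparts) $[e_1,e_i]=e_{i+1}$ ($2\le i\le n-2$), $[e_i,e_n]=e_{i+2}$ ($2\le i\le n-3$), $[e_1,x]=e_1$, $[e_i,x]=(i-2)e_i$ ($2\le i\le n-1$), $[e_n,x]=2e_n$, $[e_i,y]=e_i$ ($2\le i\le n-1$). $H^2(R,R)$ denotes the second Chevalley–Eilenberg cohomology of the Lie algebra $R$ with coefficients in the adjoint module. *)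

(* Defs.v *)
From HB Require Import structures.
From mathcomp Require Import all_boot all_order all_algebra.
Set Implicit Arguments. Unset Strict Implicit. Unset Printing Implicit Defensive.
Import Order.TTheory GRing.Theory Num.Theory.
Local Open Scope ring_scope.

(* A Lie algebra with basis e_0,...,e_(N-1) is given by structure constants
   sc i j k = coefficient of e_k in [e_i, e_j].  Vectors are row vectors. *)
Section LieCohom.
Variables (C : fieldType) (N : nat).

Definition bvec (i : 'I_N) : 'rV[C]_N := delta_mx 0 i.

Definition lbr (sc : 'I_N -> 'I_N -> 'I_N -> C) (x y : 'rV[C]_N) : 'rV[C]_N :=
  \row_k \sum_i \sum_j x 0 i * y 0 j * sc i j k.

Definition ext2 (phi : 'I_N -> 'I_N -> 'rV[C]_N) (x y : 'rV[C]_N) : 'rV[C]_N :=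
  \sum_i \sum_j (x 0 i * y 0 j) *: phi i j.

Definition alternating2 (phi : 'I_N -> 'I_N -> 'rV[C]_N) : Prop :=
  (forall a, phi a a = 0) /\ (forall a b, phi a b = - phi b a).

(* Chevalley-Eilenberg differential d^2 with adjoint coefficients vanishes *)
Definition cocycle2 sc (phi : 'I_N -> 'I_N -> 'rV[C]_N) : Prop :=
  forall a b c : 'I_N,
    let x := bvec a in let y := bvec b in let z := bvec c in
    lbr sc x (ext2 phi y z) - lbr sc y (ext2 phi x z) + lbr sc z (ext2 phi x y)
    - ext2 phi (lbr sc x y) z + ext2 phi (lbr sc x z) y
    - ext2 phi (lbr sc y z) x = 0.

(* phi = d f for a linear map f : L -> L (f v = v *m F) *)
Definition coboundary2 sc (phi : 'I_N -> 'I_N -> 'rV[C]_N) : Prop :=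
  exists F : 'M[C]_N, forall a b : 'I_N,
    phi a b = lbr sc (bvec a) (bvec b *m F) - lbr sc (bvec b) (bvec a *m F)
              - lbr sc (bvec a) (bvec b) *m F.

Definition H2_adj_trivial sc : Prop :=
  forall phi, alternating2 phi -> cocycle2 sc phi -> coboundary2 sc phi.
End LieCohom.

(* Structure constants in 1-based nat indexing: e_1..e_n are 1..n,
   x is n+1, y is n+2.  raw lists each nonzero bracket [u,v] once (one
   orientation); the antisymmetric counterpart is added by sc_of. *)
Section Algebras.
Variable C : fieldType.

Definition ind (b : bool) : C := if b then 1 else 0.

Definition raw1 (n i j k : nat) : C :=
    ind [&& i == 1, 2 <= j <= n - 2 & k == j.+1]%N
  + ind [&& 2 <= i <= (n - 1) %/ 2, j == n - i & k == n]%N * (-1) ^+ i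
  + ind [&& i == 1, j == n.+1 & k == 1]%N
  + ind [&& 2 <= i <= n - 1, j == n.+1 & k == i]%N * (i%:R - 2)
  + ind [&& i == n, j == n.+1 & k == n]%N * ((n - 4)%:R)
  + ind [&& 2 <= i <= n - 1, j == n.+2 & k == i]%N
  + ind [&& i == n, j == n.+2 & k == n]%N * 2.

Definition raw2 (n i j k : nat) : C :=
    ind [&& i == 1, 2 <= j <= n - 2 & k == j.+1]%N
  + ind [&& 2 <= i <= n - 3, j == n & k == i.+2]%N
  + ind [&& i == 1, j == n.+1 & k == 1]%N
  + ind [&& 2 <= i <= n - 1, j == n.+1 & k == i]%N * (i%:R - 2)
  + ind [&& i == n, j == n.+1 & k == n]%N * 2
  + ind [&& 2 <= i <= n - 1, j == n.+2 & k == i]%N.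

Definition sc_of (n : nat) (raw : nat -> nat -> nat -> nat -> C)
  (i j k : 'I_(n.+2)) : C :=
  raw n i.+1 j.+1 k.+1 - raw n j.+1 i.+1 k.+1.

Definition scR1 n := @sc_of n raw1.
Definition scR2 n := @sc_of n raw2.
End Algebras.
Arguments scR1 : clear implicits.
Arguments scR2 : clear implicits.

(* Main.v *)
Require Import Defs.
From HB Require Import structures.
From mathcomp Require Import all_boot all_order all_algebra.
Import Order.TTheory GRing.Theory Num.Theory.
Local Open Scope ring_scope.
From mathcomp Require Import zify ring lra.
Set Implicit Arguments. Unset Strict Implicit. Unset Printing Implicit Defensive.


Section Gen.
Variables (C : numFieldType) (N : nat) (sc : 'I_N -> 'I_N -> 'I_N -> C).

Lemma bvecE (a k : 'I_N) : bvec C a 0 k = (k == a)%:R.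
Proof. by rewrite /bvec mxE eqxx. Qed.

Lemma sum1 (l0 : 'I_N) (g : 'I_N -> C) :
  (forall l, l != l0 -> g l = 0) -> \sum_l g l = g l0.
Proof. by move=> H; rewrite (bigD1 l0) //= big1 ?addr0. Qed.
Arguments sum1 l0 {g}.

Lemma lbr_bE a (y : 'rV[C]_N) k : lbr sc (bvec C a) y 0 k = \sum_l y 0 l * sc a l k.
Proof.
rewrite mxE (sum1 a).
  by apply: eq_bigr => l _; rewrite bvecE eqxx mul1r.
move=> i ne; apply: big1 => j _; by rewrite bvecE (negbTE ne) !mul0r.
Qed.

Lemma lbr_bb a b k : lbr sc (bvec C a) (bvec C b) 0 k = sc a b k.
Proof.
rewrite lbr_bE (sum1 b); first by rewrite bvecE eqxx mul1r.
by move=> l ne; rewrite bvecE (negbTE ne) mul0r.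
Qed.

Variable phi : 'I_N -> 'I_N -> 'rV[C]_N.
Local Notation p a b k := (phi a b 0 k).

Lemma ext2E (x y : 'rV[C]_N) k :
  ext2 phi x y 0 k = \sum_i \sum_j x 0 i * y 0 j * p i j k.
Proof.
rewrite /ext2 summxE; apply: eq_bigr => i _; rewrite summxE.
by apply: eq_bigr => j _; rewrite mxE.
Qed.

Lemma ext2_r (x : 'rV[C]_N) c k : ext2 phi x (bvec C c) 0 k = \sum_l x 0 l * p l c k.
Proof.
rewrite ext2E; apply: eq_bigr => i _; rewrite (sum1 c).
  by rewrite bvecE eqxx mulr1.
by move=> j ne; rewrite bvecE (negbTE ne) mulr0 mul0r.
Qed.

Lemma ext2_bb a b : ext2 phi (bvec C a) (bvec C b) = phi a b.
Proof.
apply/rowP => k; rewrite ext2_r (sum1 a); first by rewrite bvecE eqxx mul1r.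
by move=> l ne; rewrite bvecE (negbTE ne) mul0r.
Qed.

Lemma mxDE (A B : 'rV[C]_N) k : (A + B) 0 k = A 0 k + B 0 k.
Proof. by rewrite mxE. Qed.
Lemma mxNE (A : 'rV[C]_N) k : (- A) 0 k = - A 0 k.
Proof. by rewrite mxE. Qed.

Lemma cocycleE : cocycle2 sc phi -> forall a b c m,
  \sum_l p b c l * sc a l m - \sum_l p a c l * sc b l m + \sum_l p a b l * sc c l m
  - \sum_l sc a b l * p l c m + \sum_l sc a c l * p l b m
  - \sum_l sc b c l * p l a m = 0.
Proof.
move=> H a b c m; have := H a b c => /= /rowP /(_ m).
rewrite !(mxDE, mxNE) !ext2_bb !lbr_bE !ext2_r.
have E : forall a b (g : 'I_N -> C),
  \sum_l lbr sc (bvec C a) (bvec C b) 0 l * g l = \sum_l sc a b l * g l.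
  by move=> *; apply: eq_bigr => *; rewrite lbr_bb.
by rewrite !E mxE.
Qed.

Definition dF (F : 'M[C]_N) a b m :=
  \sum_l F b l * sc a l m - \sum_l F a l * sc b l m - \sum_l sc a b l * F l m.

Lemma cobE (F : 'M[C]_N) : (forall a b m, p a b m = dF F a b m) -> coboundary2 sc phi.
Proof.
move=> H; exists F => a b; apply/rowP => m; rewrite H !(mxDE, mxNE).
rewrite !lbr_bE /dF; congr (_ - _ - _).
- by apply: eq_bigr => l _; rewrite -rowE mxE.
- by apply: eq_bigr => l _; rewrite -rowE mxE.
- by rewrite mxE; apply: eq_bigr => l _; rewrite lbr_bb.
Qed.

Lemma dF_add F1 F2 a b m : dF (F1 + F2) a b m = dF F1 a b m + dF F2 a b m.
Proof.
rewrite /dF.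
have E : forall (f g h : 'I_N -> C), \sum_l (f l + g l) * h l = \sum_l f l * h l + \sum_l g l * h l.
  by move=> f g h; rewrite -big_split; apply: eq_bigr => l _; rewrite mulrDl.
have E' : forall (f g h : 'I_N -> C), \sum_l h l * (f l + g l) = \sum_l h l * f l + \sum_l h l * g l.
  by move=> f g h; rewrite -big_split; apply: eq_bigr => l _; rewrite mulrDr.
under eq_bigr do rewrite mxE.
under [X in _ - X - _]eq_bigr do rewrite mxE.
under [X in _ - X]eq_bigr do rewrite mxE.
rewrite E E E'. ring.
Qed.

Lemma eq_from (x y z : C) : z = 0 -> x - y = z -> x = y.
Proof. by move=> -> /eqP; rewrite subr_eq0 => /eqP. Qed.

Lemma eq_fromN (x y z : C) : z = 0 -> x - y = - z -> x = y.
Proof. by move=> -> /eqP; rewrite oppr0 subr_eq0 => /eqP. Qed.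

Lemma sum_sc_l (f g : 'I_N -> C) a m :
  (forall l, sc a l m != 0 -> f l = g l) ->
  \sum_l f l * sc a l m = \sum_l g l * sc a l m.
Proof.
move=> H; apply: eq_bigr => l _; have [->|ne] := eqVneq (sc a l m) 0.
  by rewrite !mulr0.
by rewrite H.
Qed.

Lemma sum_sc_r (f g : 'I_N -> C) a b :
  (forall l, sc a b l != 0 -> f l = g l) ->
  \sum_l sc a b l * f l = \sum_l sc a b l * g l.
Proof.
move=> H; apply: eq_bigr => l _; have [->|ne] := eqVneq (sc a b l) 0.
  by rewrite !mul0r.
by rewrite H.
Qed.

Hypothesis HantiS : forall i j k, sc i j k = - sc j i k.
Hypothesis Halt : alternating2 phi.
Hypothesis Hcoc : cocycle2 sc phi.

Lemma p_anti a b k : p a b k = - p b a k.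
Proof. by rewrite Halt.2 mxNE. Qed.

Lemma p_diag a k : p a a k = 0.
Proof. by rewrite Halt.1 mxE. Qed.

Lemma sc_diag a k : sc a a k = 0.
Proof.
have := HantiS a a k; move/eqP; rewrite -addr_eq0 -mulr2n -mulr_natr.
by rewrite mulf_eq0 pnatr_eq0 orbF => /eqP.
Qed.

Lemma Lh (h : 'I_N) (w : 'I_N -> C)
  (Hh : forall j k, j != k -> sc j h k = 0) (Hw : forall j, sc j h j = w j) a b m :
  (w a + w b - w m) * p a b m =
  \sum_l p h b l * sc a l m - \sum_l p h a l * sc b l m - \sum_l sc a b l * p h l m.
Proof.
have := cocycleE Hcoc h a b m.
have e1 : \sum_l p a b l * sc h l m = - w m * p a b m.
  rewrite (sum1 m); first by rewrite HantiS Hw mulrN mulNr mulrC.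
  by move=> l ne; rewrite HantiS Hh ?oppr0 ?mulr0.
have e4 : \sum_l sc h a l * p l b m = - w a * p a b m.
  rewrite (sum1 a); first by rewrite HantiS Hw.
  by move=> l ne; rewrite HantiS Hh ?oppr0 ?mul0r // eq_sym.
have e5 : \sum_l sc h b l * p l a m = w b * p a b m.
  rewrite (sum1 b); first by rewrite HantiS Hw p_anti mulNr mulrN opprK.
  by move=> l ne; rewrite HantiS Hh ?oppr0 ?mul0r // eq_sym.
have e6 : \sum_l sc a b l * p l h m = - \sum_l sc a b l * p h l m.
  by rewrite -sumrN; apply: eq_bigr => l _; rewrite p_anti mulrN.
rewrite e1 e4 e5 e6 => E; apply: (eq_from E); ring.
Qed.


Variables (X Y : 'I_N) (W lv : 'I_N -> nat).
Hypothesis HX : forall j k, j != k -> sc j X k = 0.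
Hypothesis HY : forall j k, j != k -> sc j Y k = 0.
Hypothesis HuX : forall j, sc j X j = (W j)%:R - (2 * lv j)%:R.
Hypothesis HvY : forall j, sc j Y j = (lv j)%:R.
Hypothesis Hgr : forall i j k, sc i j k != 0 ->
  (W i + W j = W k)%N /\ (lv i + lv j = lv k)%N.
Hypothesis Hinj : forall l l', W l = W l' -> lv l = lv l' -> (0 < W l)%N -> l = l'.

Definition uw j : C := (W j)%:R - (2 * lv j)%:R.
Definition vw j : C := (lv j)%:R.

Lemma uv_add a b m : (W a + W b = W m)%N -> (lv a + lv b = lv m)%N ->
  uw a + uw b = uw m /\ vw a + vw b = vw m.
Proof.
move=> e1 e2; rewrite /uw /vw -e1 -e2 !mulnDr !natrD; split => //; ring.
Qed.

Lemma uv_nat a b m : uw a + uw b - uw m = 0 -> vw a + vw b - vw m = 0 ->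
  (W a + W b = W m)%N /\ (lv a + lv b = lv m)%N.
Proof.
move=> e1 e2.
have key : ((W a + W b)%N%:R - (W m)%:R : C) = (uw a + uw b - uw m) + 2%:R * (vw a + vw b - vw m).
  by rewrite /uw /vw natrD !natrM; ring.
rewrite e1 e2 mulr0 addr0 in key; move/eqP: key; rewrite subr_eq0 eqr_nat => /eqP ->.
by move/eqP: e2; rewrite /vw subr_eq0 -natrD eqr_nat => /eqP.
Qed.

Definition G : 'M[C]_N := \matrix_(b, l)
  (if uw b - uw l != 0 then p X b l / (uw b - uw l)
   else if vw b - vw l != 0 then p Y b l / (vw b - vw l) else 0).

Lemma dF_hom (F : 'M[C]_N) (q : 'I_N -> 'I_N -> C) (k : C) a b m :
  (forall x y, uw x - uw y = uw a + uw b - uw m -> vw x - vw y = vw a + vw b - vw m ->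
     F x y = k * q x y) ->
  dF F a b m = k * (\sum_l q b l * sc a l m - \sum_l q a l * sc b l m - \sum_l sc a b l * q l m).
Proof.
move=> H; rewrite /dF !mulrBr !mulr_sumr; congr (_ - _ - _).
- apply: eq_bigr => l _; have [->|/Hgr [e1 e2]] := eqVneq (sc a l m) 0; first by rewrite !mulr0.
  have [f1 f2] := uv_add e1 e2.
  rewrite H ?mulrA //; [rewrite -f1 | rewrite -f2]; ring.
- apply: eq_bigr => l _; have [->|/Hgr [e1 e2]] := eqVneq (sc b l m) 0; first by rewrite !mulr0.
  have [f1 f2] := uv_add e1 e2.
  rewrite H ?mulrA //; [rewrite -f1 | rewrite -f2]; ring.
- apply: eq_bigr => l _; have [->|/Hgr [e1 e2]] := eqVneq (sc a b l) 0; first by rewrite !(mulr0, mul0r).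
  have [f1 f2] := uv_add e1 e2.
  rewrite H; first ring. all: [> rewrite -f1 | rewrite -f2]; ring.
Qed.

Lemma dG_main a b m :
  dF G a b m = if (uw a + uw b - uw m != 0) || (vw a + vw b - vw m != 0)
               then p a b m else 0.
Proof.
set mu := uw a + uw b - uw m; set nu := vw a + vw b - vw m.
have LX := Lh (h := X) (w := uw) HX HuX a b m.
have LY := Lh (h := Y) (w := vw) HY HvY a b m.
case: (eqVneq mu 0) => Hmu /=.
  case: (eqVneq nu 0) => Hnu /=.
    rewrite (@dF_hom G (fun _ _ => 0) 0); first by rewrite mul0r.
    by move=> x y; rewrite -/mu -/nu Hmu Hnu mxE => -> ->; rewrite eqxx mul0r.
  rewrite (@dF_hom G (fun x y => p Y x y) nu^-1); first by rewrite -LY -/nu mulrA mulVf ?mul1r.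
  move=> x y; rewrite -/mu -/nu Hmu mxE => -> ->; rewrite eqxx Hnu.
  by rewrite /= mulrC.
rewrite (@dF_hom G (fun x y => p X x y) mu^-1); first by rewrite -LX -/mu mulrA mulVf ?mul1r.
move=> x y; rewrite -/mu -/nu mxE => -> ->; rewrite Hmu /=.
by rewrite mulrC.
Qed.

Lemma dF_w0 (F : 'M[C]_N) (HF : forall j l, F j l != 0 -> W j = W l /\ lv j = lv l) a b m :
  ~ ((W a + W b = W m)%N /\ (lv a + lv b = lv m)%N) -> dF F a b m = 0.
Proof.
move=> Hn; rewrite /dF !big1 ?subrr ?subr0 // => l _.
- have [->|/HF [e1 e2]] := eqVneq (F l m) 0; first by rewrite mulr0.
  have [->|/Hgr [f1 f2]] := eqVneq (sc a b l) 0; first by rewrite mul0r.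
  by exfalso; apply: Hn; rewrite -e1 -e2.
- have [->|/HF [e1 e2]] := eqVneq (F a l) 0; first by rewrite mul0r.
  have [->|/Hgr [f1 f2]] := eqVneq (sc b l m) 0; first by rewrite mulr0.
  by exfalso; apply: Hn; rewrite e1 e2 addnC [(lv _ + _)%N]addnC.
- have [->|/HF [e1 e2]] := eqVneq (F b l) 0; first by rewrite mul0r.
  have [->|/Hgr [f1 f2]] := eqVneq (sc a l m) 0; first by rewrite mulr0.
  by exfalso; apply: Hn; rewrite e1 e2.
Qed.

Theorem reduce (F0 : 'M[C]_N)
  (HF : forall j l, F0 j l != 0 -> W j = W l /\ lv j = lv l)
  (H0 : forall a b m, (W a + W b = W m)%N -> (lv a + lv b = lv m)%N -> p a b m = dF F0 a b m) :
  coboundary2 sc phi.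
Proof.
apply: (@cobE (G + F0)) => a b m; rewrite dF_add dG_main.
case: ifP => [/orP Hne | /norP [/negPn/eqP e1 /negPn/eqP e2]].
  rewrite dF_w0 ?addr0 // => -[e1 e2]; have [f1 f2] := uv_add e1 e2.
  by case: Hne; [rewrite f1 | rewrite f2]; rewrite subrr eqxx.
by have [n1 n2] := uv_nat e1 e2; rewrite add0r; exact: H0.
Qed.

Lemma coll_l (g : 'I_N -> C) a m l0 : (0 < W l0)%N -> (W a + W l0 = W m)%N -> (lv a + lv l0 = lv m)%N ->
  \sum_l g l * sc a l m = g l0 * sc a l0 m.
Proof.
move=> p0 e1 e2; apply: sum1 => l ne; have [->|/Hgr [f1 f2]] := eqVneq (sc a l m) 0; first by rewrite mulr0.
have E : l = l0 by apply: Hinj; lia.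
by rewrite E eqxx in ne.
Qed.

Lemma coll_r (g : 'I_N -> C) a b l0 : (0 < W l0)%N -> (W a + W b = W l0)%N -> (lv a + lv b = lv l0)%N ->
  \sum_l sc a b l * g l = sc a b l0 * g l0.
Proof.
move=> p0 e1 e2; apply: sum1 => l ne; have [->|/Hgr [f1 f2]] := eqVneq (sc a b l) 0; first by rewrite mul0r.
have E : l = l0 by apply: Hinj; lia.
by rewrite E eqxx in ne.
Qed.

Lemma coll0_l (g : 'I_N -> C) a m :
  (forall l, ~ ((W a + W l = W m)%N /\ (lv a + lv l = lv m)%N)) ->
  \sum_l g l * sc a l m = 0.
Proof.
move=> H; apply: big1 => l _; have [->|/Hgr [f1 f2]] := eqVneq (sc a l m) 0; first by rewrite mulr0.
by case: (H l).
Qed.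

Lemma coll0_r (g : 'I_N -> C) a b :
  (forall l, ~ ((W a + W b = W l)%N /\ (lv a + lv b = lv l)%N)) ->
  \sum_l sc a b l * g l = 0.
Proof.
move=> H; apply: big1 => l _; have [->|/Hgr [f1 f2]] := eqVneq (sc a b l) 0; first by rewrite mul0r.
by case: (H l).
Qed.

Hypothesis Ht : forall l, W l = 0%N -> l = X \/ l = Y.
Hypotheses (HWX : W X = 0%N) (HWY : W Y = 0%N) (HlX : lv X = 0%N) (HlY : lv Y = 0%N).
Hypothesis HXY : X != Y.

Lemma uw_t l : W l = 0%N -> lv l = 0%N.
Proof. by move=> /Ht [] ->. Qed.

Lemma sc_tt i j k : W i = 0%N -> W j = 0%N -> sc i j k = 0.
Proof.
move=> wi /Ht [] ->.
  have [<-|ne] := eqVneq i k; last by rewrite HX.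
  by rewrite HuX wi uw_t // muln0 subrr.
have [<-|ne] := eqVneq i k; last by rewrite HY.
by rewrite HvY uw_t.
Qed.

Lemma sum2 (g : 'I_N -> C) : (forall l, l != X -> l != Y -> g l = 0) -> \sum_l g l = g X + g Y.
Proof.
move=> H; rewrite (bigD1 X) //= (bigD1 Y) 1?eq_sym //= big1 ?addr0 // => l /andP [l1 l2].
exact: H.
Qed.

Lemma dstep h (Hh : W h = 0%N) a b m : (0 < W a)%N -> (0 < W b)%N -> (0 < W m)%N ->
  (W a + W b = W m)%N -> (lv a + lv b = lv m)%N -> sc a b m != 0 ->
  p h m m = p h a a + p h b b.
Proof.
move=> pa pb pm e1 e2 ns.
have L : 0 = \sum_l p h b l * sc a l m - \sum_l p h a l * sc b l m - \sum_l sc a b l * p h l m.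
  have [f1 f2] := uv_add e1 e2.
  case: (Ht Hh) => ->.
    by rewrite -(Lh HX HuX) f1 subrr mul0r.
  by rewrite -(Lh HY HvY) f2 subrr mul0r.
have s1 : \sum_l p h b l * sc a l m = p h b b * sc a b m.
  by apply: coll_l.
have s2 : \sum_l p h a l * sc b l m = p h a a * sc b a m.
  by apply: coll_l => //; rewrite addnC.
have s3 : \sum_l sc a b l * p h l m = sc a b m * p h m m.
  by apply: coll_r.
rewrite s1 s2 s3 [sc b a m]HantiS in L.
have L' : sc a b m * (p h b b + p h a a - p h m m) = 0.
  by rewrite L; ring.
move/eqP: L'; rewrite mulf_eq0 (negbTE ns) /= subr_eq0 => /eqP <-; ring.
Qed.

Lemma pXY E : (0 < W E)%N -> uw E * p X Y X + vw E * p X Y Y = 0.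
Proof.
move=> pE; have := cocycleE Hcoc X Y E E.
have t1 : \sum_l p Y E l * sc X l E = - uw E * p Y E E.
  rewrite (sum1 E); first by rewrite HantiS HuX mulrN mulNr mulrC.
  by move=> l ne; rewrite HantiS HX ?oppr0 ?mulr0.
have t2 : \sum_l p X E l * sc Y l E = - vw E * p X E E.
  rewrite (sum1 E); first by rewrite HantiS HvY mulrN mulNr mulrC.
  by move=> l ne; rewrite HantiS HY ?oppr0 ?mulr0.
have t3 : \sum_l p X Y l * sc E l E = p X Y X * uw E + p X Y Y * vw E.
  rewrite sum2; first by rewrite HuX HvY.
  move=> l l1 l2; have [->|/Hgr [f1 f2]] := eqVneq (sc E l E) 0; first by rewrite mulr0.
  have : W l = 0%N by lia.
  by move/Ht => [] E'; [rewrite E' eqxx in l1 | rewrite E' eqxx in l2].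
have t4 : \sum_l sc X Y l * p l E E = 0.
  by rewrite big1 // => l _; rewrite sc_tt ?mul0r.
have t5 : \sum_l sc X E l * p l Y E = uw E * p Y E E.
  rewrite (sum1 E); first by rewrite HantiS HuX p_anti /uw; ring.
  by move=> l ne; rewrite HantiS HX ?oppr0 ?mul0r // eq_sym.
have t6 : \sum_l sc Y E l * p l X E = vw E * p X E E.
  rewrite (sum1 E); first by rewrite HantiS HvY p_anti /vw; ring.
  by move=> l ne; rewrite HantiS HY ?oppr0 ?mul0r // eq_sym.
rewrite t1 t2 t3 t4 t5 t6 => E0; rewrite -E0; ring.
Qed.

Variables (E1 E2 : 'I_N).
Hypotheses (HE1 : W E1 = 1%N) (HE1' : lv E1 = 0%N) (HE2 : W E2 = 2%N) (HE2' : lv E2 = 1%N).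

Definition F0 (f : 'I_N -> C) : 'M[C]_N := \matrix_(j, l)
  (if (0 < W j)%N then (j == l)%:R * f j
   else if (0 < W l)%N then 0
   else - p j (if l == X then E1 else E2) (if l == X then E1 else E2)).

Lemma dF_anti F a b m : dF F a b m = - dF F b a m.
Proof.
rewrite /dF.
have -> : \sum_l sc b a l * F l m = - \sum_l sc a b l * F l m.
  by rewrite -sumrN; apply: eq_bigr => l _; rewrite HantiS mulNr.
ring.
Qed.

Lemma F0_ee f a b m : (0 < W a)%N -> (0 < W b)%N -> (0 < W m)%N ->
  dF (F0 f) a b m = (f a + f b - f m) * sc a b m.
Proof.
move=> pa pb pm; rewrite /dF.
rewrite (sum1 b); last by move=> l ne; rewrite mxE pb eq_sym (negbTE ne) !mul0r.
rewrite (sum1 a); last by move=> l ne; rewrite mxE pa eq_sym (negbTE ne) !mul0r.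
rewrite (sum1 m); last first.
  move=> l ne; rewrite mxE; case: ifP => _; first by rewrite (negbTE ne) mul0r mulr0.
  by rewrite pm mulr0.
rewrite !mxE pa pb pm !eqxx [sc b a m]HantiS !mul1r; ring.
Qed.

Lemma F0_te f h j : W h = 0%N -> (0 < W j)%N ->
  dF (F0 f) h j j = p h E1 E1 * uw j + p h E2 E2 * vw j.
Proof.
move=> zh pj; rewrite /dF.
rewrite (sum1 j); last by move=> l ne; rewrite mxE pj eq_sym (negbTE ne) !mul0r.
rewrite sum2; last first.
  move=> l l1 l2; rewrite mxE zh /=.
  case: (posnP (W l)) => [/Ht [] E'|_]; last by rewrite mul0r.
    by rewrite E' eqxx in l1.
  by rewrite E' eqxx in l2.
rewrite (sum1 j); last first.
  move=> l ne; rewrite mxE; case: ifP => _; first by rewrite (negbTE ne) mul0r mulr0.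
  by rewrite pj mulr0.
rewrite !mxE zh HWX HWY pj eqxx /=.
have -> : (Y == X) = false by apply/negbTE; rewrite eq_sym.
rewrite eqxx HuX HvY /uw /vw !mul1r; ring.
Qed.

Lemma F0_tt f a b m : W a = 0%N -> W b = 0%N -> dF (F0 f) a b m = 0.
Proof.
move=> za zb; rewrite /dF !big1 ?subrr // => l _.
- by rewrite sc_tt ?mul0r.
- rewrite mxE za /=; case: (posnP (W l)) => [zl|pl]; last by rewrite mul0r.
  by rewrite sc_tt ?mulr0.
- rewrite mxE zb /=; case: (posnP (W l)) => [zl|pl]; last by rewrite mul0r.
  by rewrite sc_tt ?mulr0.
Qed.

Theorem reduce2 (f : 'I_N -> C)
  (He : forall a b m, (0 < W a)%N -> (0 < W b)%N -> (0 < W m)%N ->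
     (W a + W b = W m)%N -> (lv a + lv b = lv m)%N -> p a b m = (f a + f b - f m) * sc a b m)
  (Hd : forall h j, W h = 0%N -> (0 < W j)%N -> p h j j = p h E1 E1 * uw j + p h E2 E2 * vw j) :
  coboundary2 sc phi.
Proof.
apply: (@reduce (F0 f)).
  move=> j l; rewrite mxE; case: ifP => pj.
    have [<-|ne] := eqVneq j l; first by [].
    by rewrite mul0r eqxx.
  case: ifP => pl; first by rewrite eqxx.
  have zj : W j = 0%N by lia.
  have zl : W l = 0%N by lia.
  by rewrite zj zl !uw_t.
move=> a b m e1 e2.
case: (posnP (W a)) => [za|pa]; case: (posnP (W b)) => [zb|pb].
- rewrite F0_tt //.
  have zm : W m = 0%N by lia.
  have [->|nab] := eqVneq a b; first by rewrite p_diag.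
  have pX : p X Y X = 0.
    have := pXY (E := E1); rewrite /uw /vw HE1 HE1' muln0 subr0 mul1r mul0r addr0; exact.
  have pY : p X Y Y = 0.
    have := pXY (E := E2); rewrite /uw /vw HE2 HE2' muln1 subrr mul1r mul0r add0r; exact.
  have pXY' : p X Y m = 0 by case: (Ht zm) => ->.
  case: (Ht za) => Ea; case: (Ht zb) => Eb; subst a b.
  + by rewrite eqxx in nab.
  + exact: pXY'.
  + by rewrite p_anti pXY' oppr0.
  + by rewrite eqxx in nab.
- have Em : m = b.
    by apply: Hinj; [lia | rewrite -e2 uw_t | lia].
  by subst m; rewrite F0_te // Hd.
- have Em : m = a.
    by apply: Hinj; [lia | rewrite -e2 (uw_t zb) addn0 | lia].
  by subst m; rewrite dF_anti F0_te // p_anti Hd.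
- have pm : (0 < W m)%N by lia.
  by rewrite F0_ee // He.
Qed.
End Gen.

Ltac dec := rewrite /ind /=; repeat match goal with |- context [if ?b then _ else _] =>
   first [ rewrite (_ : b = false); [|lia] | rewrite (_ : b = true); [|lia] ] end.

Module M2.




Section R2.
Variables (C : numFieldType) (n : nat).
Hypothesis hn : (5 < n)%N.
Local Notation sc := (scR2 C n).
Local Notation N := n.+2.

Definition X2 : 'I_N := @Ordinal N n (leqW (ltnSn n)).
Definition Y2 : 'I_N := ord_max.
Definition W2 (j : 'I_N) : nat := ((nat_of_ord j < n - 1) * (nat_of_ord j).+1 + (nat_of_ord j == n - 1) * 2)%N.
Definition lv2 (j : 'I_N) : nat := ((0 < nat_of_ord j) && (nat_of_ord j < n - 1))%N.

Lemma anti2 i j k : sc i j k = - sc j i k.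
Proof. by rewrite /scR2 /sc_of opprB. Qed.

Lemma HX2 j k : j != k -> sc j X2 k = 0.
Proof.
move=> /eqP ne; have ne' : nat_of_ord j <> nat_of_ord k by move=> E; apply: ne; apply: val_inj.
have := ltn_ord j; have := ltn_ord k.
rewrite /scR2 /sc_of /raw2 /= => ? ?; dec; ring.
Qed.

Lemma HY2 j k : j != k -> sc j Y2 k = 0.
Proof.
move=> /eqP ne; have ne' : nat_of_ord j <> nat_of_ord k by move=> E; apply: ne; apply: val_inj.
have := ltn_ord j; have := ltn_ord k.
rewrite /scR2 /sc_of /raw2 /= => ? ?; dec; ring.
Qed.

Lemma reg (j : 'I_N) : nat_of_ord j = 0%N \/ (1 <= j <= n - 2)%N \/ nat_of_ord j = (n - 1)%N \/ (n <= j)%N.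
Proof. have := ltn_ord j; lia. Qed.

Lemma HuX2 j : sc j X2 j = (W2 j)%:R - (2 * lv2 j)%:R.
Proof.
have := ltn_ord j; rewrite /scR2 /sc_of /raw2 /= => ?.
case: (reg j) => [h|[h|[h|h]]].
- rewrite (_ : W2 j = 1%N); last by rewrite /W2; lia.
  rewrite (_ : lv2 j = 0%N); last by rewrite /lv2; lia.
  dec; ring.
- rewrite (_ : W2 j = j.+1); last by rewrite /W2; lia.
  rewrite (_ : lv2 j = 1%N); last by rewrite /lv2; lia.
  dec; ring.
- rewrite (_ : W2 j = 2%N); last by rewrite /W2; lia.
  rewrite (_ : lv2 j = 0%N); last by rewrite /lv2; lia.
  dec; ring.
- rewrite (_ : W2 j = 0%N); last by rewrite /W2; lia.
  rewrite (_ : lv2 j = 0%N); last by rewrite /lv2; lia.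
  dec; ring.
Qed.

Lemma HvY2 j : sc j Y2 j = (lv2 j)%:R.
Proof.
have := ltn_ord j; rewrite /scR2 /sc_of /raw2 /= => ?.
case: (reg j) => [h|[h|[h|h]]].
- rewrite (_ : lv2 j = 0%N); last by rewrite /lv2; lia.
  dec; ring.
- rewrite (_ : lv2 j = 1%N); last by rewrite /lv2; lia.
  dec; ring.
- rewrite (_ : lv2 j = 0%N); last by rewrite /lv2; lia.
  dec; ring.
- rewrite (_ : lv2 j = 0%N); last by rewrite /lv2; lia.
  dec; ring.
Qed.

Lemma Hgr2 i j k : sc i j k != 0 -> (W2 i + W2 j = W2 k)%N /\ (lv2 i + lv2 j = lv2 k)%N.
Proof.
move=> H.
case: (boolP ((W2 i + W2 j == W2 k) && (lv2 i + lv2 j == lv2 k))%N) => [/andP [/eqP ? /eqP ?] //|nG].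
exfalso; move/eqP: H; apply.
have := ltn_ord i; have := ltn_ord j; have := ltn_ord k.
rewrite /W2 /lv2 in nG.
rewrite /scR2 /sc_of /raw2 /= => ? ? ?; dec; ring.
Qed.

Lemma Hinj2 l l' : W2 l = W2 l' -> lv2 l = lv2 l' -> (0 < W2 l)%N -> l = l'.
Proof.
have := ltn_ord l; have := ltn_ord l'.
rewrite /W2 /lv2 => ? ? ? ? ?; apply: val_inj => /=; lia.
Qed.

Lemma Ht2 l : W2 l = 0%N -> l = X2 \/ l = Y2.
Proof.
have := ltn_ord l; rewrite /W2 => ? ?.
have [h|h] : nat_of_ord l = n \/ nat_of_ord l = n.+1 by lia.
  by left; apply: val_inj.
by right; apply: val_inj.
Qed.

Definition oo (k : nat) : 'I_N := inord k.
Lemma val_oo k : (k <= n.+1)%N -> nat_of_ord (oo k) = k.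
Proof. by move=> h; rewrite /oo inordK. Qed.
Lemma valX2 : nat_of_ord X2 = n. Proof. by []. Qed.
Lemma valY2 : nat_of_ord Y2 = n.+1. Proof. by []. Qed.

Lemma sc2_a (a b m : 'I_N) : nat_of_ord a = 0%N -> (1 <= b <= n - 3)%N -> nat_of_ord m = (b + 1)%N ->
  sc a b m = 1.
Proof. move=> *; rewrite /scR2 /sc_of /raw2; dec; ring. Qed.

Lemma sc2_b (a b m : 'I_N) : (1 <= a <= n - 4)%N -> nat_of_ord b = (n - 1)%N -> nat_of_ord m = (a + 2)%N ->
  sc a b m = 1.
Proof. move=> *; rewrite /scR2 /sc_of /raw2; dec; ring. Qed.

Variable phi : 'I_N -> 'I_N -> 'rV[C]_N.
Hypotheses (Halt : alternating2 phi) (Hcoc : cocycle2 sc phi).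
Local Notation p a b k := (phi a b 0 k).

Lemma Hd2 h j : W2 h = 0%N -> (0 < W2 j)%N ->
  p h j j = p h (oo 0) (oo 0) * uw C W2 lv2 j + p h (oo 1) (oo 1) * vw C lv2 j.
Proof.
move=> zh pj.
pose q (j : 'I_N) := p h j j - p h (oo 0) (oo 0) * uw C W2 lv2 j - p h (oo 1) (oo 1) * vw C lv2 j.
suff Q : q j = 0 by apply: (eq_from Q); rewrite /q; ring.
have qadd : forall a b m, (0 < W2 a)%N -> (0 < W2 b)%N -> (0 < W2 m)%N ->
    (W2 a + W2 b = W2 m)%N -> (lv2 a + lv2 b = lv2 m)%N -> sc a b m != 0 -> q m = q a + q b.
  move=> a b m pa pb pm e1 e2 ns.
  rewrite /q (dstep anti2 Halt Hcoc HX2 HY2 HuX2 HvY2 Hgr2 Hinj2 Ht2 zh pa pb pm e1 e2 ns).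
  have [f1 f2] := uv_add C e1 e2; rewrite -f1 -f2; ring.
have q0 : q (oo 0) = 0.
  rewrite /q /uw /vw (_ : W2 (oo 0) = 1%N); last by rewrite /W2 val_oo; lia.
  rewrite (_ : lv2 (oo 0) = 0%N); last by rewrite /lv2 val_oo; lia.
  ring.
have q1 : q (oo 1) = 0.
  rewrite /q /uw /vw (_ : W2 (oo 1) = 2%N); last by rewrite /W2 val_oo; lia.
  rewrite (_ : lv2 (oo 1) = 1%N); last by rewrite /lv2 val_oo; lia.
  ring.
have qmid : forall k, (1 <= k <= n - 2)%N -> q (oo k) = 0.
  elim => [|k IH] hk; first lia.
  case: (eqVneq k 0) => [->|nk0]; first exact: q1.
  rewrite (qadd (oo 0) (oo k)); first by rewrite q0 IH ?addr0 //; lia.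
  all: rewrite ?sc2_a ?oner_neq0 // /W2 /lv2 ?val_oo //; try lia.
have qn : q (oo (n - 1)) = 0.
  have H := qadd (oo 1) (oo (n - 1)) (oo 3).
  rewrite q1 add0r qmid in H; last lia.
  symmetry; apply: H; rewrite ?sc2_b ?oner_neq0 // /W2 /lv2 ?val_oo //; try lia.
have jv : j = oo (nat_of_ord j) by rewrite /oo inord_val.
have [h0|[h1|h2]] : nat_of_ord j = 0%N \/ (1 <= j <= n - 2)%N \/ nat_of_ord j = (n - 1)%N.
  by move: pj; rewrite /W2; have := ltn_ord j; lia.
- by rewrite jv h0.
- by rewrite jv; apply: qmid.
- by rewrite jv h2.
Qed.

Fixpoint fm (k : nat) : C :=
  if k is k'.+1 then (if k' is 0 then 0 else fm k' - p (oo 0) (oo k') (oo k'.+1)) else 0.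
Definition fR (k : nat) : C :=
  if k == (n - 1)%N then p (oo 1) (oo (n - 1)) (oo 3) + fm 3 - fm 1 else fm k.

Lemma fm_S k : (1 <= k)%N -> fm k.+1 = fm k - p (oo 0) (oo k) (oo k.+1).
Proof. by case: k. Qed.
Lemma fR_fm k : k != (n - 1)%N -> fR k = fm k.
Proof. by rewrite /fR => /negbTE ->. Qed.

Lemma fam1 k : (1 <= k <= n - 3)%N ->
  p (oo 0) (oo k) (oo k.+1) = (fR 0 + fR k - fR k.+1).
Proof.
move=> hk; rewrite !fR_fm; try (apply/eqP; lia).
rewrite fm_S; last lia.
rewrite /=; ring.
Qed.

Lemma fam2 k : (1 <= k <= n - 4)%N ->
  p (oo k) (oo (n - 1)) (oo (k + 2)) = fR k + fR (n - 1) - fR (k + 2).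
Proof.
elim: k => [|k IH] hk; first lia.
case: (eqVneq k 0) => [k0|nk0].
  subst k; rewrite /fR /=.
  rewrite (_ : (1 == n - 1)%N = false); last lia.
  rewrite (_ : (3 == n - 1)%N = false); last lia.
  rewrite eqxx /=; ring.
rewrite (_ : (k.+1 + 2 = k + 3)%N); last lia.
have E := cocycleE Hcoc (oo 0) (oo k) (oo (n - 1)) (oo (k + 3)).
rewrite (coll_l Hgr2 Hinj2 (fun l => phi (oo k) (oo (n - 1)) 0 l) (l0 := oo (k + 2))) in E; try (rewrite /W2 /lv2 ?val_oo; lia).
rewrite (coll0_l Hgr2 (fun l => phi (oo 0) (oo (n - 1)) 0 l)) in E; try (move=> l; have := ltn_ord l; rewrite /W2 /lv2 ?val_oo; lia).
rewrite (coll_l Hgr2 Hinj2 (fun l => phi (oo 0) (oo k) 0 l) (l0 := oo k.+1)) in E; try (rewrite /W2 /lv2 ?val_oo; lia).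
rewrite (coll_r Hgr2 Hinj2 (fun l => phi l (oo (n - 1)) 0 (oo (k + 3))) (l0 := oo k.+1)) in E; try (rewrite /W2 /lv2 ?val_oo; lia).
rewrite (coll0_r Hgr2 (fun l => phi l (oo k) 0 (oo (k + 3)))) in E; try (move=> l; have := ltn_ord l; rewrite /W2 /lv2 ?val_oo; lia).
rewrite (coll_r Hgr2 Hinj2 (fun l => phi l (oo 0) 0 (oo (k + 3))) (l0 := oo (k + 2))) in E; try (rewrite /W2 /lv2 ?val_oo; lia).
rewrite [scR2 C n (oo (n - 1)) _ _]anti2 in E.
rewrite (@sc2_a (oo 0) (oo (k + 2)) (oo (k + 3))) in E; try (rewrite ?val_oo; lia).
rewrite (@sc2_a (oo 0) (oo k) (oo k.+1)) in E; try (rewrite ?val_oo; lia).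
rewrite (@sc2_b (oo k.+1) (oo (n - 1)) (oo (k + 3))) in E; try (rewrite ?val_oo; lia).
rewrite (@sc2_b (oo k) (oo (n - 1)) (oo (k + 2))) in E; try (rewrite ?val_oo; lia).
rewrite [p (oo (k + 2)) (oo 0) _](p_anti Halt) in E.
have g2 : p (oo 0) (oo (k + 2)) (oo (k + 3)) = fR 0 + fR (k + 2) - fR (k + 3).
  have := fam1 (k := (k + 2)%N); rewrite (_ : (k + 2).+1 = (k + 3))%N; last lia.
  apply; lia.
rewrite IH ?fam1 ?g2 in E; try lia.
first [apply: (eq_from E); ring | apply: (eq_fromN E); ring].
Qed.

Lemma oo_eq (j : 'I_N) k : nat_of_ord j = k -> j = oo k.
Proof. by move=> <-; rewrite /oo inord_val. Qed.

Definition f2 (j : 'I_N) : C := fR j.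

Lemma swap_case (f : 'I_N -> C) a b m :
  p b a m = (f b + f a - f m) * sc b a m -> p a b m = (f a + f b - f m) * sc a b m.
Proof. by move=> H; rewrite (p_anti Halt) H anti2; ring. Qed.

Lemma case1 (a b m : 'I_N) : nat_of_ord a = 0%N -> (1 <= b <= n - 3)%N -> nat_of_ord m = (b + 1)%N ->
  p a b m = (f2 a + f2 b - f2 m) * sc a b m.
Proof.
move=> ha hb hm; rewrite sc2_a // mulr1.
rewrite (oo_eq ha) (oo_eq (erefl (nat_of_ord b))) (oo_eq hm) /f2 !val_oo; try lia.
by rewrite addn1 fam1.
Qed.

Lemma case2 (a b m : 'I_N) : (1 <= a <= n - 4)%N -> nat_of_ord b = (n - 1)%N -> nat_of_ord m = (a + 2)%N ->
  p a b m = (f2 a + f2 b - f2 m) * sc a b m.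
Proof.
move=> ha hb hm; rewrite sc2_b // mulr1.
rewrite (oo_eq (erefl (nat_of_ord a))) (oo_eq hb) (oo_eq hm) /f2 !val_oo; try lia.
by rewrite fam2.
Qed.

Lemma Wreg2 (j : 'I_N) :
  (nat_of_ord j = 0%N /\ W2 j = 1%N /\ lv2 j = 0%N) \/
  ((1 <= j <= n - 2)%N /\ W2 j = (nat_of_ord j).+1 /\ lv2 j = 1%N) \/
  (nat_of_ord j = (n - 1)%N /\ W2 j = 2%N /\ lv2 j = 0%N) \/
  ((n <= j)%N /\ W2 j = 0%N /\ lv2 j = 0%N).
Proof. have := ltn_ord j; rewrite /W2 /lv2; lia. Qed.

Lemma He2 a b m : (0 < W2 a)%N -> (0 < W2 b)%N -> (0 < W2 m)%N ->
  (W2 a + W2 b = W2 m)%N -> (lv2 a + lv2 b = lv2 m)%N ->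
  p a b m = (f2 a + f2 b - f2 m) * sc a b m.
Proof.
move=> pa pb pm e1 e2.
have [h|[h|[h|[h|h]]]] :
  nat_of_ord a = nat_of_ord b \/
  (nat_of_ord a = 0%N /\ (1 <= b <= n - 3)%N /\ nat_of_ord m = (b + 1)%N) \/
  (nat_of_ord b = 0%N /\ (1 <= a <= n - 3)%N /\ nat_of_ord m = (a + 1)%N) \/
  ((1 <= a <= n - 4)%N /\ nat_of_ord b = (n - 1)%N /\ nat_of_ord m = (a + 2)%N) \/
  ((1 <= b <= n - 4)%N /\ nat_of_ord a = (n - 1)%N /\ nat_of_ord m = (b + 2)%N).
  by case: (Wreg2 a) => [ha|[ha|[ha|ha]]]; case: (Wreg2 b) => [hb|[hb|[hb|hb]]];
     case: (Wreg2 m) => [hm|[hm|[hm|hm]]]; lia.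
- have -> : a = b by apply: val_inj.
  by rewrite (p_diag Halt) (sc_diag anti2) mulr0.
- by case: h => [h1 [h2 h3]]; apply: case1.
- by case: h => [h1 [h2 h3]]; apply: swap_case; apply: case1.
- by case: h => [h1 [h2 h3]]; apply: case2.
- by case: h => [h1 [h2 h3]]; apply: swap_case; apply: case2.
Qed.

Theorem R2_cob : coboundary2 sc phi.
Proof.
apply: (reduce2 anti2 Halt Hcoc HX2 HY2 HuX2 HvY2 Hgr2 Hinj2 Ht2 _ _ _ _ _ _ _ _ _ He2 Hd2).
- by rewrite /W2 valX2; lia.
- by rewrite /W2 valY2; lia.
- by rewrite /lv2 valX2; lia.
- by rewrite /lv2 valY2; lia.
- by rewrite -val_eqE /=; lia.
- by rewrite /W2 val_oo //; lia.
- by rewrite /lv2 val_oo //; lia.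
- by rewrite /W2 val_oo //; lia.
- by rewrite /lv2 val_oo //; lia.
Qed.
End R2.

End M2.

Module M1.




Section R1.
Variables (C : numFieldType) (n : nat).
Hypothesis hn : (5 < n)%N.
Hypothesis hodd : odd n.
Local Notation sc := (scR1 C n).
Local Notation N := n.+2.

Lemma hn2 : (n %% 2 = 1)%N.
Proof. by rewrite modn2 hodd. Qed.

Definition X1 : 'I_N := @Ordinal N n (leqW (ltnSn n)).
Definition Y1 : 'I_N := ord_max.
Definition W1 (j : 'I_N) : nat := ((nat_of_ord j < n) * (nat_of_ord j).+1)%N.
Definition lv1 (j : 'I_N) : nat := (((0 < nat_of_ord j) && (nat_of_ord j < n - 1)) + 2 * (nat_of_ord j == n - 1))%N.

Lemma anti1 i j k : sc i j k = - sc j i k.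
Proof. by rewrite /scR1 /sc_of opprB. Qed.

Lemma HX1 j k : j != k -> sc j X1 k = 0.
Proof.
move=> /eqP ne; have ne' : nat_of_ord j <> nat_of_ord k by move=> E; apply: ne; apply: val_inj.
have := ltn_ord j; have := ltn_ord k.
rewrite /scR1 /sc_of /raw1 /= => ? ?; dec; ring.
Qed.

Lemma HY1 j k : j != k -> sc j Y1 k = 0.
Proof.
move=> /eqP ne; have ne' : nat_of_ord j <> nat_of_ord k by move=> E; apply: ne; apply: val_inj.
have := ltn_ord j; have := ltn_ord k.
rewrite /scR1 /sc_of /raw1 /= => ? ?; dec; ring.
Qed.

Lemma reg1 (j : 'I_N) : nat_of_ord j = 0%N \/ (1 <= j <= n - 2)%N \/ nat_of_ord j = (n - 1)%N \/ (n <= j)%N.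
Proof. have := ltn_ord j; lia. Qed.

Lemma HuX1 j : sc j X1 j = (W1 j)%:R - (2 * lv1 j)%:R.
Proof.
have := ltn_ord j; rewrite /scR1 /sc_of /raw1 /= => ?.
case: (reg1 j) => [h|[h|[h|h]]].
- rewrite (_ : W1 j = 1%N); last by rewrite /W1; lia.
  rewrite (_ : lv1 j = 0%N); last by rewrite /lv1; lia.
  dec; ring.
- rewrite (_ : W1 j = j.+1); last by rewrite /W1; lia.
  rewrite (_ : lv1 j = 1%N); last by rewrite /lv1; lia.
  dec; ring.
- rewrite (_ : W1 j = n); last by rewrite /W1; lia.
  rewrite (_ : lv1 j = 2%N); last by rewrite /lv1; lia.
  dec; rewrite natrB; last lia.
  ring.
- rewrite (_ : W1 j = 0%N); last by rewrite /W1; lia.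
  rewrite (_ : lv1 j = 0%N); last by rewrite /lv1; lia.
  dec; ring.
Qed.

Lemma HvY1 j : sc j Y1 j = (lv1 j)%:R.
Proof.
have := ltn_ord j; rewrite /scR1 /sc_of /raw1 /= => ?.
case: (reg1 j) => [h|[h|[h|h]]].
- rewrite (_ : lv1 j = 0%N); last by rewrite /lv1; lia.
  dec; ring.
- rewrite (_ : lv1 j = 1%N); last by rewrite /lv1; lia.
  dec; ring.
- rewrite (_ : lv1 j = 2%N); last by rewrite /lv1; lia.
  dec; ring.
- rewrite (_ : lv1 j = 0%N); last by rewrite /lv1; lia.
  dec; ring.
Qed.

Lemma Hgr1 i j k : sc i j k != 0 -> (W1 i + W1 j = W1 k)%N /\ (lv1 i + lv1 j = lv1 k)%N.
Proof.
move=> H.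
case: (boolP ((W1 i + W1 j == W1 k) && (lv1 i + lv1 j == lv1 k))%N) => [/andP [/eqP ? /eqP ?] //|nG].
exfalso; move/eqP: H; apply.
have := ltn_ord i; have := ltn_ord j; have := ltn_ord k.
rewrite /W1 /lv1 in nG.
rewrite /scR1 /sc_of /raw1 /= => ? ? ?; dec; ring.
Qed.

Lemma Hinj1 l l' : W1 l = W1 l' -> lv1 l = lv1 l' -> (0 < W1 l)%N -> l = l'.
Proof.
have := ltn_ord l; have := ltn_ord l'.
rewrite /W1 /lv1 => ? ? ? ? ?; apply: val_inj => /=; lia.
Qed.

Lemma Ht1 l : W1 l = 0%N -> l = X1 \/ l = Y1.
Proof.
have := ltn_ord l; rewrite /W1 => ? ?.
have [h|h] : nat_of_ord l = n \/ nat_of_ord l = n.+1 by lia.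
  by left; apply: val_inj.
by right; apply: val_inj.
Qed.

Definition oo (k : nat) : 'I_N := inord k.
Lemma val_oo k : (k <= n.+1)%N -> nat_of_ord (oo k) = k.
Proof. by move=> h; rewrite /oo inordK. Qed.
Lemma valX1 : nat_of_ord X1 = n. Proof. by []. Qed.
Lemma valY1 : nat_of_ord Y1 = n.+1. Proof. by []. Qed.

Lemma sc1_a (a b m : 'I_N) : nat_of_ord a = 0%N -> (1 <= b <= n - 3)%N -> nat_of_ord m = (b + 1)%N ->
  sc a b m = 1.
Proof. move=> *; rewrite /scR1 /sc_of /raw1; dec; ring. Qed.

Lemma sc1_b (a b m : 'I_N) : (1 <= a)%N -> (2 * (nat_of_ord a).+1 <= n - 1)%N ->
  nat_of_ord b = (n - 2 - a)%N -> nat_of_ord m = (n - 1)%N ->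
  sc a b m = (-1) ^+ (nat_of_ord a).+1.
Proof. have := hn2; move=> *; rewrite /scR1 /sc_of /raw1; dec; ring. Qed.

Variable phi : 'I_N -> 'I_N -> 'rV[C]_N.
Hypotheses (Halt : alternating2 phi) (Hcoc : cocycle2 sc phi).
Local Notation p a b k := (phi a b 0 k).

Lemma Hd1 h j : W1 h = 0%N -> (0 < W1 j)%N ->
  p h j j = p h (oo 0) (oo 0) * uw C W1 lv1 j + p h (oo 1) (oo 1) * vw C lv1 j.
Proof.
move=> zh pj.
pose q (j : 'I_N) := p h j j - p h (oo 0) (oo 0) * uw C W1 lv1 j - p h (oo 1) (oo 1) * vw C lv1 j.
suff Q : q j = 0 by apply: (eq_from Q); rewrite /q; ring.
have qadd : forall a b m, (0 < W1 a)%N -> (0 < W1 b)%N -> (0 < W1 m)%N ->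
    (W1 a + W1 b = W1 m)%N -> (lv1 a + lv1 b = lv1 m)%N -> sc a b m != 0 -> q m = q a + q b.
  move=> a b m pa pb pm e1 e2 ns.
  rewrite /q (dstep anti1 Halt Hcoc HX1 HY1 HuX1 HvY1 Hgr1 Hinj1 Ht1 zh pa pb pm e1 e2 ns).
  have [f1 f2] := uv_add C e1 e2; rewrite -f1 -f2; ring.
have q0 : q (oo 0) = 0.
  rewrite /q /uw /vw (_ : W1 (oo 0) = 1%N); last by rewrite /W1 val_oo; lia.
  rewrite (_ : lv1 (oo 0) = 0%N); last by rewrite /lv1 val_oo; lia.
  ring.
have q1 : q (oo 1) = 0.
  rewrite /q /uw /vw (_ : W1 (oo 1) = 2%N); last by rewrite /W1 val_oo; lia.
  rewrite (_ : lv1 (oo 1) = 1%N); last by rewrite /lv1 val_oo; lia.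
  ring.
have qmid : forall k, (1 <= k <= n - 2)%N -> q (oo k) = 0.
  elim => [|k IH] hk; first lia.
  case: (eqVneq k 0) => [->|nk0]; first exact: q1.
  rewrite (qadd (oo 0) (oo k)); first by rewrite q0 IH ?addr0 //; lia.
  all: rewrite ?sc1_a ?oner_neq0 // /W1 /lv1 ?val_oo //; try lia.
have qn : q (oo (n - 1)) = 0.
  have H := qadd (oo 1) (oo (n - 3)) (oo (n - 1)).
  rewrite q1 add0r (qmid (n - 3)%N) in H; last lia.
  apply: H; rewrite ?sc1_b ?signr_eq0 // /W1 /lv1 ?val_oo //; try lia.
have jv : j = oo (nat_of_ord j) by rewrite /oo inord_val.
have [h0|[h1|h2]] : nat_of_ord j = 0%N \/ (1 <= j <= n - 2)%N \/ nat_of_ord j = (n - 1)%N.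
  by move: pj; rewrite /W1; have := ltn_ord j; lia.
- by rewrite jv h0.
- by rewrite jv; apply: qmid.
- by rewrite jv h2.
Qed.

Fixpoint fm (k : nat) : C :=
  if k is k'.+1 then (if k' is 0 then 0 else fm k' - p (oo 0) (oo k') (oo k'.+1)) else 0.
Definition fR (k : nat) : C :=
  if k == (n - 1)%N then fm 1 + fm (n - 3) - p (oo 1) (oo (n - 3)) (oo (n - 1)) else fm k.

Lemma fm_S k : (1 <= k)%N -> fm k.+1 = fm k - p (oo 0) (oo k) (oo k.+1).
Proof. by case: k. Qed.
Lemma fR_fm k : k != (n - 1)%N -> fR k = fm k.
Proof. by rewrite /fR => /negbTE ->. Qed.

Lemma fam1 k : (1 <= k <= n - 3)%N ->
  p (oo 0) (oo k) (oo k.+1) = (fR 0 + fR k - fR k.+1).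
Proof.
move=> hk; rewrite !fR_fm; try (apply/eqP; lia).
rewrite fm_S; last lia.
rewrite /=; ring.
Qed.

Lemma fam2 k : (1 <= k)%N -> (2 * k.+1 <= n - 1)%N ->
  p (oo k) (oo (n - 2 - k)) (oo (n - 1)) = (fR k + fR (n - 2 - k) - fR (n - 1)) * (-1) ^+ k.+1.
Proof.
elim: k => [|k IH] hk1 hk2; first lia.
case: (eqVneq k 0) => [k0|nk0].
  subst k; rewrite (_ : (n - 2 - 1 = n - 3)%N); last lia.
  rewrite /fR.
  rewrite (_ : (1 == n - 1)%N = false); last lia.
  rewrite (_ : (n - 3 == n - 1)%N = false); last lia.
  rewrite eqxx; ring.
rewrite (_ : (n - 2 - k.+1 = n - 3 - k)%N); last lia.
have E := cocycleE Hcoc (oo 0) (oo k) (oo (n - 3 - k)) (oo (n - 1)).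
rewrite (coll0_l Hgr1 (fun l => phi (oo k) (oo (n - 3 - k)) 0 l)) in E;
  try (move=> l; have := ltn_ord l; rewrite /W1 /lv1 ?val_oo; lia).
rewrite (coll_l Hgr1 Hinj1 (fun l => phi (oo 0) (oo (n - 3 - k)) 0 l) (l0 := oo (n - 2 - k))) in E;
  try (rewrite /W1 /lv1 ?val_oo; lia).
rewrite (coll_l Hgr1 Hinj1 (fun l => phi (oo 0) (oo k) 0 l) (l0 := oo k.+1)) in E;
  try (rewrite /W1 /lv1 ?val_oo; lia).
rewrite (coll_r Hgr1 Hinj1 (fun l => phi l (oo (n - 3 - k)) 0 (oo (n - 1))) (l0 := oo k.+1)) in E;
  try (rewrite /W1 /lv1 ?val_oo; lia).
rewrite (coll_r Hgr1 Hinj1 (fun l => phi l (oo k) 0 (oo (n - 1))) (l0 := oo (n - 2 - k))) in E;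
  try (rewrite /W1 /lv1 ?val_oo; lia).
rewrite (coll0_r Hgr1 (fun l => phi l (oo 0) 0 (oo (n - 1)))) in E;
  try (move=> l; have := ltn_ord l; rewrite /W1 /lv1 ?val_oo; lia).
rewrite [scR1 C n (oo (n - 3 - k)) _ _]anti1 in E.
rewrite (@sc1_b (oo k) (oo (n - 2 - k)) (oo (n - 1))) in E; try (rewrite ?val_oo; lia).
rewrite (@sc1_b (oo k.+1) (oo (n - 3 - k)) (oo (n - 1))) in E; try (rewrite ?val_oo; lia).
rewrite (@sc1_a (oo 0) (oo k) (oo k.+1)) in E; try (rewrite ?val_oo; lia).
rewrite (@sc1_a (oo 0) (oo (n - 3 - k)) (oo (n - 2 - k))) in E; try (rewrite ?val_oo; lia).
rewrite !val_oo in E; try lia.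
rewrite [p (oo (n - 2 - k)) (oo k) _](p_anti Halt) in E.
have g2 : p (oo 0) (oo (n - 3 - k)) (oo (n - 2 - k)) = fR 0 + fR (n - 3 - k) - fR (n - 2 - k).
  have := fam1 (k := (n - 3 - k)%N); rewrite (_ : (n - 3 - k).+1 = (n - 2 - k))%N; last lia.
  apply; lia.
rewrite IH ?fam1 ?g2 in E; try lia.
rewrite !exprS in E; rewrite !exprS.
first [apply: (eq_from E); ring | apply: (eq_fromN E); ring].
Qed.

Lemma oo_eq (j : 'I_N) k : nat_of_ord j = k -> j = oo k.
Proof. by move=> <-; rewrite /oo inord_val. Qed.

Definition f1 (j : 'I_N) : C := fR j.

Lemma swap_case (f : 'I_N -> C) a b m :
  p b a m = (f b + f a - f m) * sc b a m -> p a b m = (f a + f b - f m) * sc a b m.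
Proof. by move=> H; rewrite (p_anti Halt) H anti1; ring. Qed.

Lemma case1 (a b m : 'I_N) : nat_of_ord a = 0%N -> (1 <= b <= n - 3)%N -> nat_of_ord m = (b + 1)%N ->
  p a b m = (f1 a + f1 b - f1 m) * sc a b m.
Proof.
move=> ha hb hm; rewrite sc1_a // mulr1.
rewrite (oo_eq ha) (oo_eq (erefl (nat_of_ord b))) (oo_eq hm) /f1 !val_oo; try lia.
by rewrite addn1 fam1.
Qed.

Lemma case2 (a b m : 'I_N) : (1 <= a)%N -> (2 * (nat_of_ord a).+1 <= n - 1)%N ->
  nat_of_ord b = (n - 2 - a)%N -> nat_of_ord m = (n - 1)%N ->
  p a b m = (f1 a + f1 b - f1 m) * sc a b m.
Proof.
move=> ha ha' hb hm; rewrite sc1_b //.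
rewrite (oo_eq (erefl (nat_of_ord a))) (oo_eq hb) (oo_eq hm) /f1 !val_oo; try lia.
by rewrite fam2.
Qed.

Lemma Wreg1 (j : 'I_N) :
  (nat_of_ord j = 0%N /\ W1 j = 1%N /\ lv1 j = 0%N) \/
  ((1 <= j <= n - 2)%N /\ W1 j = (nat_of_ord j).+1 /\ lv1 j = 1%N) \/
  (nat_of_ord j = (n - 1)%N /\ W1 j = n /\ lv1 j = 2%N) \/
  ((n <= j)%N /\ W1 j = 0%N /\ lv1 j = 0%N).
Proof. have := ltn_ord j; rewrite /W1 /lv1; lia. Qed.

Lemma He1 a b m : (0 < W1 a)%N -> (0 < W1 b)%N -> (0 < W1 m)%N ->
  (W1 a + W1 b = W1 m)%N -> (lv1 a + lv1 b = lv1 m)%N ->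
  p a b m = (f1 a + f1 b - f1 m) * sc a b m.
Proof.
move=> pa pb pm e1 e2.
have h2 := hn2.
have [h|[h|[h|[h|h]]]] :
  nat_of_ord a = nat_of_ord b \/
  (nat_of_ord a = 0%N /\ (1 <= b <= n - 3)%N /\ nat_of_ord m = (b + 1)%N) \/
  (nat_of_ord b = 0%N /\ (1 <= a <= n - 3)%N /\ nat_of_ord m = (a + 1)%N) \/
  ((1 <= a)%N /\ (2 * (nat_of_ord a).+1 <= n - 1)%N /\ nat_of_ord b = (n - 2 - a)%N /\ nat_of_ord m = (n - 1)%N) \/
  ((1 <= b)%N /\ (2 * (nat_of_ord b).+1 <= n - 1)%N /\ nat_of_ord a = (n - 2 - b)%N /\ nat_of_ord m = (n - 1)%N).
  by case: (Wreg1 a) => [ha|[ha|[ha|ha]]]; case: (Wreg1 b) => [hb|[hb|[hb|hb]]];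
     case: (Wreg1 m) => [hm|[hm|[hm|hm]]]; lia.
- have -> : a = b by apply: val_inj.
  by rewrite (p_diag Halt) (sc_diag anti1) mulr0.
- by case: h => [h1 [h2' h3]]; apply: case1.
- by case: h => [h1 [h2' h3]]; apply: swap_case; apply: case1.
- by case: h => [h1 [h2' [h3 h4]]]; apply: case2.
- by case: h => [h1 [h2' [h3 h4]]]; apply: swap_case; apply: case2.
Qed.

Theorem R1_cob : coboundary2 sc phi.
Proof.
apply: (reduce2 anti1 Halt Hcoc HX1 HY1 HuX1 HvY1 Hgr1 Hinj1 Ht1 _ _ _ _ _ _ _ _ _ He1 Hd1).
- by rewrite /W1 valX1; lia.
- by rewrite /W1 valY1; lia.
- by rewrite /lv1 valX1; lia.
- by rewrite /lv1 valY1; lia.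
- by rewrite -val_eqE /=; lia.
- by rewrite /W1 val_oo //; lia.
- by rewrite /lv1 val_oo //; lia.
- by rewrite /W1 val_oo //; lia.
- by rewrite /lv1 val_oo //; lia.
Qed.
End R1.

End M1.

Theorem theorem3p8 (C : numClosedFieldType) (n : nat) (hn : (5 < n)%N) :
  (odd n -> H2_adj_trivial (scR1 C n)) /\ H2_adj_trivial (scR2 C n).
Proof.
split.
  move=> hodd phi Halt Hcoc; exact: (M1.R1_cob hn hodd Halt Hcoc).
move=> phi Halt Hcoc; exact: (M2.R2_cob hn Halt Hcoc).
Qed.
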